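(* Let $\epsilon\in[0,1]$. If $\epsilon\ge 1-1/\sqrt2$, then the noisy projected number POVM $\mathsf N^{\rm prono}$ and the noisy projected canonical phase POVM $\Phi$, both with noise parameter $\epsilon$, are jointly measurable.
   Context: All operators act on $\mathbb C^2$. $\mathsf N^{\rm prono}_0=\begin{pmatrix}1-\epsilon/2&0\\0&\epsilon/2\end{pmatrix}$, $\mathsf N^{\rm prono}_1=\begin{pmatrix}\epsilon/2&0\\0&1-\epsilon/2\end{pmatrix}$. For Borel $X\subseteq[0,2\pi)$, $\Phi(X)=\int_X\begin{pmatrix}1&(1-\epsilon)e^{-i\theta}\\(1-\epsilon)e^{i\theta}&1\end{pmatrix}\frac{d\theta}{2\pi}$. Joint measurability means existence of a POVM $\mathsf M$ on $\{0,1\}\times[0,2\pi)$ with $\mathsf M(\{n\}\times[0,2\pi))=\mathsf N^{\rm prono}_n$ for $n=0,1$ and $\mathsf M(\{0,1\}\times X)=\Phi(X)$ for all Borel $X$. *)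

(* Defs.v *)
From HB Require Import structures.
From mathcomp Require Import all_boot all_order all_algebra.
From mathcomp Require Import all_classical all_reals all_analysis.
From mathcomp Require Import complex.
Set Implicit Arguments. Unset Strict Implicit. Unset Printing Implicit Defensive.
Import Order.TTheory GRing.Theory Num.Theory.
Import numFieldNormedType.Exports.
Local Open Scope classical_set_scope.
Local Open Scope ring_scope.
Local Open Scope complex_scope.

Section Defs.
Variable R : realType.
Local Notation C := R[i].

Definition psd (A : 'M[C]_2) : Prop :=
  forall v : 'cV[C]_2, 0 <= ((\row_j (v j 0)^*) *m A *m v) 0 0.

Definition complex_cvg (u : nat -> C) (l : C) : Prop :=
  (fun n => complex.Re (u n)) @ \oo --> complex.Re l /\
  (fun n => complex.Im (u n)) @ \oo --> complex.Im l.

(** A POVM on the measurable subset [D] of a measurable space [T]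
    (i.e. on [D] with its trace sigma-algebra): defined on measurable subsets
    of [D], positive, normalized, and countably additive (entrywise,
    equivalently in any operator topology since dim = 2). *)
Definition povm_on d (T : measurableType d) (D : set T)
    (M : set T -> 'M[C]_2) : Prop :=
  [/\ M D = 1,
      (forall A, measurable A -> A `<=` D -> psd (M A)) &
      (forall F : nat -> set T,
         (forall k, measurable (F k)) -> (forall k, F k `<=` D) ->
         trivIset setT F ->
         forall i j : 'I_2,
           complex_cvg (fun n => \sum_(k < n) M (F k) i j)
                       (M (\bigcup_k F k) i j))].

Definition I02pi : set R := `[0, 2 * pi[%classic.

(** Noisy projected number POVM; outcome [false] is n = 0, [true] is n = 1. *)
Definition Nprono (eps : R) (n : bool) : 'M[C]_2 :=
  if n then \matrix_(i < 2, j < 2)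
              (if i == j then (if i == 0 :> nat then (eps / 2)%:C
                               else (1 - eps / 2)%:C) else 0)
  else \matrix_(i < 2, j < 2)
              (if i == j then (if i == 0 :> nat then (1 - eps / 2)%:C
                               else (eps / 2)%:C) else 0).

Definition phi_density (eps : R) (theta : R) : 'M[C]_2 :=
  \matrix_(i < 2, j < 2)
    (if i == j then 1
     else if i == 0 :> nat then (1 - eps)%:C * (cos theta +i* (- sin theta))
     else (1 - eps)%:C * (cos theta +i* sin theta)).

Definition Phi (eps : R) (X : set R) : 'M[C]_2 :=
  \matrix_(i < 2, j < 2)
    ((Rintegral lebesgue_measure X
        (fun theta => complex.Re (phi_density eps theta i j)) / (2 * pi))
     +i* (Rintegral lebesgue_measure X
        (fun theta => complex.Im (phi_density eps theta i j)) / (2 * pi))).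

Definition jointly_measurable_prono_phase (eps : R) : Prop :=
  exists M : set (bool * R) -> 'M[C]_2,
    [/\ povm_on (setT `*` I02pi) M,
        (forall n : bool, M ([set n] `*` I02pi) = Nprono eps n) &
        (forall X : set R, measurable X -> X `<=` I02pi ->
           M (setT `*` X) = Phi eps X)].

End Defs.

(* Main.v *)
Require Import Defs.
From HB Require Import structures.
From mathcomp Require Import all_boot all_order all_algebra.
From mathcomp Require Import all_classical all_reals all_analysis.
From mathcomp Require Import complex.
From mathcomp Require Import ring lra.
Import Order.TTheory GRing.Theory Num.Theory.
Import numFieldNormedType.Exports.
Local Open Scope ring_scope.

Section Aux.
Context {R : realType}.
Local Notation C := R[i].
Local Notation mu := (@lebesgue_measure R).
Local Open Scope classical_set_scope.
Local Open Scope ring_scope.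
Local Open Scope complex_scope.
Local Notation II := (@I02pi R).

Definition herm (a b c d : R) : 'M[C]_2 :=
  \matrix_(i < 2, j < 2)
    (if i == j then (if i == 0 :> nat then a%:C else d%:C)
     else if i == 0 :> nat then (b +i* (- c)) else (b +i* c)).

Lemma psd_herm a b c d :
  (forall x0 y0 x1 y1 : R, 0 <= a*(x0^+2+y0^+2) + d*(x1^+2+y1^+2)
      + 2*((x0*x1+y0*y1)*b + (x0*y1 - y0*x1)*c)) -> psd (herm a b c d).
Proof.
move=> H v.
rewrite !mxE !big_ord_recr !big_ord0 /= !mxE !big_ord_recr !big_ord0 /= !mxE /=.
case: (v _ _) => x0 y0; case: (v _ _) => x1 y1.
rewrite lecE /=; apply/andP; split.
  apply/eqP; ring.
have := H x0 y0 x1 y1. nra.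
Qed.


Lemma ring1 (eps k z : R) : k * ((1 - eps/2) * z + eps/2 * z) = k * z.
Proof. by field; rewrite ?pnatr_eq0. Qed.
Lemma ring2 (eps k z : R) : k * ((1-eps)/2) * (z + z) = k * ((1-eps) * z).
Proof. by field; rewrite ?pnatr_eq0. Qed.
Lemma ring3 (eps k z : R) : k * (eps/2 * z + (1 - eps/2) * z) = k * z.
Proof. by field; rewrite ?pnatr_eq0. Qed.

Lemma Re_herm_fun (al be ga de : nat -> R) (i j : 'I_2) :
  (fun n => complex.Re (herm (al n) (be n) (ga n) (de n) i j)) =
  (fun n => if i == j then (if i == 0 :> nat then al n else de n) else be n).
Proof.
apply/funext => n; rewrite mxE.
by case: i => [[|[|//]] ?]; case: j => [[|[|//]] ?].
Qed.

Lemma Im_herm_fun (al be ga de : nat -> R) (i j : 'I_2) :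
  (fun n => complex.Im (herm (al n) (be n) (ga n) (de n) i j)) =
  (fun n => if i == j then 0 else if i == 0 :> nat then - ga n else ga n).
Proof.
apply/funext => n; rewrite mxE.
by case: i => [[|[|//]] ?]; case: j => [[|[|//]] ?].
Qed.

Definition G (g : R -> R) (Y : set R) : R := Rintegral mu (Y `&` II) g.

Lemma mI : measurable (II : set R).
Proof. exact: measurable_itv. Qed.

Lemma int_cont g (Y : set R) : continuous g -> measurable Y -> Y `<=` II ->
  mu.-integrable Y (EFin \o g).
Proof.
move=> cg mY YI; apply: (@integrableS _ _ _ mu `[0, 2 * pi]) => //.
- by apply: subset_trans YI _; apply/subset_itvP; exact: subset_itv_co_cc.
- apply: continuous_compact_integrable; first exact: segment_compact.
  exact: continuous_subspaceT.
Qed.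

Lemma G_sigma g (Y : nat -> set R) : continuous g ->
  (forall k, measurable (Y k)) -> trivIset setT Y ->
  (fun N => \sum_(k < N) G g (Y k)) @ \oo --> G g (\bigcup_k Y k).
Proof.
move=> cg mY tY.
have intf : mu.-integrable setT ((EFin \o g) \_ II).
  apply/integrable_restrict => //; first exact: mI.
  by rewrite setTI; apply: int_cont => //; exact: mI.
pose nu := induced_charge intf.
have mU : measurable (\bigcup_k Y k) by exact: bigcup_measurable.
have := @charge_semi_sigma_additive _ _ _ nu Y mY tY mU.
have nuE : forall A, measurable A -> nu A = (G g A)%:E.
  move=> A mA; rewrite /nu /induced_charge -integral_mkcondr /G /Rintegral fineK //.
  apply: integrable_fin_num => //; first by apply: measurableI => //; exact: mI.
  by apply: int_cont => //; solve [exact: subIsetr | apply: measurableI => //; exact: mI].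
have -> : (fun n => \sum_(0 <= i < n) nu (Y i)) = (fun n => (\sum_(k < n) G g (Y k))%:E).
  by apply/funext => n; rewrite -sumEFin big_mkord; apply: eq_bigr => i _; exact: (nuE _ (mY i)).
move=> h; have h2 := nuE _ mU.
pose P := fun l : \bar R => (fun n => (\sum_(k < n) G g (Y k))%:E) @ \oo --> l.
have h3 : P (G g (\bigcup_k Y k))%:E by rewrite -h2; exact: h.
exact: (fine_cvg h3).
Qed.

Lemma pi2_gt0 : 0 < 2 * pi :> R.
Proof. by rewrite mulr_gt0 // pi_gt0. Qed.

Lemma FTC_I (g F : R -> R) : continuous g -> continuous F -> (forall x, is_derive x (1:R) F (g x)) ->
  Rintegral mu II g = F (2 * pi) - F 0.
Proof.
move=> cg cF dF.
have iI : mu.-integrable II (EFin \o g) by apply: int_cont => //; exact: mI.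
rewrite /I02pi Rintegral_itv_bndo_bndc //.
rewrite /Rintegral (@continuous_FTC2 _ g F _ _ pi2_gt0) //.
- exact: continuous_subspaceT.
- split.
  + by move=> x _; apply: ex_derive.
  + by apply: cvg_at_right_filter; exact: cF.
  + by apply: cvg_at_left_filter; exact: cF.
- by move=> x _; rewrite derive1E derive_val.
Qed.

Lemma cont_add (f g : R -> R) : continuous f -> continuous g ->
  continuous (fun t => f t + g t).
Proof. by move=> cf cg x; apply: cvgD; [exact: cf | exact: cg]. Qed.

Lemma cont_scale (r : R) (f : R -> R) : continuous f -> continuous (fun t => r * f t).
Proof. by move=> cf x; apply: cvgM; [exact: cvg_cst | exact: cf]. Qed.

Lemma cont_cst (r : R) : continuous (fun _ : R => r).
Proof. by move=> x; exact: cvg_cst. Qed.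

Lemma twopi : 2 * pi = pi *+ 2 :> R.
Proof. by rewrite mulrC mulr_natr. Qed.

Lemma G1_I : G (fun _ => 1) II = 2 * pi.
Proof.
rewrite /G setIid (@FTC_I _ id) ?subr0 //.
- exact: cont_cst.
- by move=> x.
Qed.

Lemma Gcos_I : G cos II = 0.
Proof.
rewrite /G setIid (@FTC_I _ sin) //.
- by rewrite twopi sin2pi sin0 subr0.
- exact: continuous_cos.
- exact: continuous_sin.
Qed.

Lemma Gsin_I : G sin II = 0.
Proof.
have dF : forall x, is_derive x (1:R) (fun x => - cos x) (sin x).
  by move=> x; rewrite -[sin x]opprK; apply: is_deriveN.
have cF : continuous (fun x : R => - cos x).
  by move=> x; apply: continuousN; exact: continuous_cos.
rewrite /G setIid (@FTC_I sin (fun x => - cos x) (@continuous_sin R) cF dF).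
by rewrite twopi cos2pi cos0 subrr.
Qed.

Lemma fin_step (s w : R) : 0 <= s -> w^+2 <= s^+2 -> 0 <= s + w.
Proof. move=> *; nra. Qed.

Lemma quad (a b c X Y p q u v : R) : 0 <= a -> 0 <= b -> 0 <= c -> c^+2 <= a*b ->
  0 <= X -> 0 <= Y -> p^+2 + q^+2 = X*Y -> u^+2 + v^+2 = 1 ->
  0 <= (a*X+b*Y) + 2*c*(p*u+q*v).
Proof.
move=> a0 b0 c0 cab X0 Y0 pq uv.
set t := p*u+q*v.
have ht : t^+2 <= X*Y.
  have e : t^+2 + (p*v - q*u)^+2 = (p^+2+q^+2)*(u^+2+v^+2) by rewrite /t; ring.
  rewrite uv mulr1 pq in e.
  have := sqr_ge0 (p*v-q*u); lra.
have s0 : 0 <= a*X+b*Y by apply: addr_ge0; apply: mulr_ge0.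
have XY0 : 0 <= X*Y by apply: mulr_ge0.
have h1 : c^+2 * t^+2 <= c^+2 * (X*Y) by apply: ler_wpM2l => //; exact: sqr_ge0.
have h2 : c^+2 * (X*Y) <= a*b*(X*Y) by apply: ler_wpM2r.
have h3 : (a*X+b*Y)^+2 - 4*(a*b*(X*Y)) = (a*X-b*Y)^+2 by ring.
have h4 := sqr_ge0 (a*X-b*Y).
have e2 : (2*c*t)^+2 = 4*(c^+2*t^+2) by ring.
have s2 : (2*c*t)^+2 <= (a*X+b*Y)^+2 by lra.
exact: (fin_step _ _ s0 s2).
Qed.

Lemma bracket (a b c X Y p q : R) (Z : set R) : measurable Z -> 0 <= a -> 0 <= b ->
  0 <= c -> c^+2 <= a*b -> 0 <= X -> 0 <= Y -> p^+2+q^+2 = X*Y ->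
  0 <= (a*X+b*Y) * G (fun _ => 1) Z + 2*c*(p * G cos Z + q * G sin Z).
Proof.
move=> mZ a0 b0 c0 cab X0 Y0 pq.
rewrite /G; set W := Z `&` II.
have mW : measurable W by apply: measurableI => //; exact: mI.
have WI : W `<=` II by exact: subIsetr.
have cc := @continuous_cos R; have cs := @continuous_sin R.
have i1 : mu.-integrable W (EFin \o (fun _ => 1:R)) by apply: int_cont => //; exact: cont_cst.
have ic : mu.-integrable W (EFin \o cos) by apply: int_cont.
have isn : mu.-integrable W (EFin \o sin) by apply: int_cont.
have ipc : mu.-integrable W (EFin \o (fun t => p * cos t)).
  by apply: int_cont => //; exact: cont_scale.
have iqs : mu.-integrable W (EFin \o (fun t => q * sin t)).
  by apply: int_cont => //; exact: cont_scale.
have isum : mu.-integrable W (EFin \o (fun t => p * cos t + q * sin t)).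
  by apply: int_cont => //; apply: cont_add; exact: cont_scale.
have ik : mu.-integrable W (EFin \o (fun t => (a*X+b*Y) * 1)).
  by apply: int_cont => //; exact: cont_cst.
have i2 : mu.-integrable W (EFin \o (fun t => 2*c*(p * cos t + q * sin t))).
  by apply: int_cont => //; apply: cont_scale; apply: cont_add; exact: cont_scale.
rewrite -(RintegralZl (a*X+b*Y) _ i1) -?(RintegralZl p _ ic) -?(RintegralZl q _ isn);
  try exact: mW.
rewrite -(RintegralD _ ipc iqs) -?(RintegralZl (2*c) _ isum) -?(RintegralD _ ik i2); try exact: mW.
apply: Rintegral_ge0 => x _; rewrite mulr1.
by apply: quad => //; exact: cos2Dsin2.
Qed.

Lemma herm_add a b c d a' b' c' d' :
  herm a b c d + herm a' b' c' d' = herm (a+a') (b+b') (c+c') (d+d').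
Proof.
apply/matrixP => i j; rewrite !mxE.
by case: ifP => _; [case: ifP => _|case: ifP => _]; apply/eqP;
  rewrite eq_complex /= ?opprD ?addr0 ?eqxx.
Qed.

Lemma herm0 : herm 0 0 0 0 = 0.
Proof.
apply/matrixP => i j; rewrite !mxE.
by case: ifP => _; [case: ifP => _|case: ifP => _]; apply/eqP;
  rewrite eq_complex /= ?oppr0 ?eqxx.
Qed.

Lemma herm_sum (al be ga de : nat -> R) N :
  \sum_(k < N) herm (al k) (be k) (ga k) (de k) =
  herm (\sum_(k < N) al k) (\sum_(k < N) be k) (\sum_(k < N) ga k) (\sum_(k < N) de k).
Proof.
elim: N => [|N IH]; first by rewrite !big_ord0 herm0.
by rewrite !big_ord_recr /= IH herm_add.
Qed.

Definition sec (S : set (bool * R)) (n : bool) : set R := [set t | S (n, t)].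

Definition SA (f : set (bool * R) -> R) : Prop :=
  forall F : nat -> set (bool * R), (forall k, measurable (F k)) -> trivIset setT F ->
  (fun N => \sum_(k < N) f (F k)) @ \oo --> f (\bigcup_k F k).

Lemma SA_add f g : SA f -> SA g -> SA (fun S => f S + g S).
Proof.
move=> hf hg F mF tF.
have -> : (fun N => \sum_(k < N) (f (F k) + g (F k))) =
          (fun N => \sum_(k < N) f (F k) + \sum_(k < N) g (F k)).
  by apply/funext => N; rewrite big_split.
by apply: cvgD; [exact: hf | exact: hg].
Qed.

Lemma SA_scale r f : SA f -> SA (fun S => r * f S).
Proof.
move=> hf F mF tF.
have -> : (fun N => \sum_(k < N) (r * f (F k))) =
          (fun N => r * \sum_(k < N) f (F k)).
  by apply/funext => N; rewrite mulr_sumr.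
by apply: cvgM; [exact: cvg_cst | exact: hf].
Qed.

Lemma msec (S : set (bool * R)) n : measurable S -> measurable (sec S n).
Proof.
move=> mS; have h := measurable_xsection n mS.
by rewrite xsectionE in h.
Qed.

Lemma SA_sec g n : continuous g -> SA (fun S => G g (sec S n)).
Proof.
move=> cg F mF tF.
have -> : sec (\bigcup_k F k) n = \bigcup_k sec (F k) n.
  by apply/seteqP; split => t [k _ h]; exists k.
apply: G_sigma => //.
- by move=> k; apply: msec.
- move=> i j _ _ [t [hi hj]]; apply: tF => //; by exists (n, t).
Qed.

Definition av (eps : R) (n : bool) : R := if n then eps/2 else 1 - eps/2.
Definition bv (eps : R) (n : bool) : R := if n then 1 - eps/2 else eps/2.
Definition cc (eps : R) : R := (1 - eps)/2.
Definition K : R := (2 * pi)^-1.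
Lemma Kmul (x : R) : K * (x * (2 * pi)) = x.
Proof.
have h : 2 * pi != 0 :> R by rewrite gt_eqF // mulr_gt0 // pi_gt0.
by rewrite /K mulrC -mulrA mulfV // mulr1.
Qed.

Definition Lf S n := G (fun _ => 1) (sec S n).
Definition Cf S n := G cos (sec S n).
Definition Sf S n := G sin (sec S n).
Definition alpha eps S := K * (av eps false * Lf S false + av eps true * Lf S true).
Definition beta eps S := K * cc eps * (Cf S false + Cf S true).
Definition gamma eps S := K * cc eps * (Sf S false + Sf S true).
Definition delta eps S := K * (bv eps false * Lf S false + bv eps true * Lf S true).
Definition Mj eps S := herm (alpha eps S) (beta eps S) (gamma eps S) (delta eps S).

Lemma SA_alpha eps : SA (fun S => alpha eps S).
Proof. by rewrite /alpha; apply: SA_scale; apply: SA_add; apply: SA_scale; apply: SA_sec; exact: cont_cst. Qed.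
Lemma SA_delta eps : SA (fun S => delta eps S).
Proof. by rewrite /delta; apply: SA_scale; apply: SA_add; apply: SA_scale; apply: SA_sec; exact: cont_cst. Qed.
Lemma SA_beta eps : SA (fun S => beta eps S).
Proof. by rewrite /beta; apply: SA_scale; apply: SA_add; apply: SA_sec; exact: continuous_cos. Qed.
Lemma SA_gamma eps : SA (fun S => gamma eps S).
Proof. by rewrite /gamma; apply: SA_scale; apply: SA_add; apply: SA_sec; exact: continuous_sin. Qed.

Lemma sec_D n : sec (setT `*` II) n = II.
Proof. by apply/seteqP; split => t /=; [case|]. Qed.

Lemma sec_n n m : sec ([set n] `*` II) m = if m == n then II else set0.
Proof.
apply/seteqP; case: eqP => [->|nm]; split => t /=.
- by case.
- by [].
- by case.
- by [].
Qed.

Lemma sec_X X n : sec (setT `*` X) n = X.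
Proof. by apply/seteqP; split => t /=; [case|]. Qed.

Lemma G_set0 g : G g set0 = 0.
Proof. by rewrite /G set0I Rintegral_set0. Qed.

Lemma G_sub g X : X `<=` II -> G g X = Rintegral mu X g.
Proof. by move=> XI; rewrite /G setIidl. Qed.

Lemma herm_1 : herm 1 0 0 1 = 1.
Proof.
apply/matrixP => i j; rewrite !mxE /phi_density.
case: i => [[|[|//]] ?]; case: j => [[|[|//]] ?] //=;
  by apply/eqP; rewrite eq_complex /= ?oppr0 ?eqxx.
Qed.

Lemma Nprono_herm eps n : Nprono eps n = herm (av eps n) 0 0 (bv eps n).
Proof.
apply/matrixP => i j; case: n; rewrite !mxE;
case: i => [[|[|//]] ?]; case: j => [[|[|//]] ?] //=;
  by apply/eqP; rewrite eq_complex /= ?oppr0 ?eqxx.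
Qed.

Lemma phiRe (eps t : R) (i j : 'I_2) : complex.Re (phi_density eps t i j) =
  if i == j then 1 else (1 - eps) * cos t.
Proof.
rewrite /phi_density mxE.
by case: i => [[|[|//]] ?]; case: j => [[|[|//]] ?] //=; rewrite mul0r subr0.
Qed.

Lemma phiIm (eps t : R) (i j : 'I_2) : complex.Im (phi_density eps t i j) =
  if i == j then 0 else if i == 0 :> nat then (- (1 - eps)) * sin t
  else (1 - eps) * sin t.
Proof.
rewrite /phi_density mxE.
by case: i => [[|[|//]] ?]; case: j => [[|[|//]] ?] //=; rewrite mul0r addr0 // mulrN mulNr.
Qed.

Lemma Phi_herm (eps : R) (X : set R) : measurable X -> X `<=` II ->
  Phi eps X = herm (K * Rintegral mu X (fun _ => 1))
    (K * ((1 - eps) * Rintegral mu X cos)) (K * ((1 - eps) * Rintegral mu X sin))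
    (K * Rintegral mu X (fun _ => 1)).
Proof.
move=> mX XI.
have ic : mu.-integrable X (EFin \o cos) by apply: int_cont => //; exact: continuous_cos.
have isn : mu.-integrable X (EFin \o sin) by apply: int_cont => //; exact: continuous_sin.
have i0 : Rintegral mu X (fun _ => 0) = 0.
  by rewrite /Rintegral integral0.
apply/matrixP => i j; rewrite !mxE.
have -> : (fun t => complex.Re (phi_density eps t i j)) =
  (fun t => if i == j then 1 else (1 - eps) * cos t) by apply/funext => t; exact: phiRe.
have -> : (fun t => complex.Im (phi_density eps t i j)) =
  (fun t => if i == j then 0 else if i == 0 :> nat then (- (1 - eps)) * sin t
  else (1 - eps) * sin t) by apply/funext => t; exact: phiIm.
case: i => [[|[|//]] ?]; case: j => [[|[|//]] ?] //=; apply/eqP; rewrite eq_complex /=;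
  apply/andP; split; apply/eqP.
- by rewrite /K; ring.
- by rewrite i0 mul0r.
- rewrite (RintegralZl (1-eps) _ ic); last exact: mX.
  by rewrite /K; ring.
- rewrite (RintegralZl (-(1-eps)) _ isn); last exact: mX.
  by rewrite /K; ring.
- rewrite (RintegralZl (1-eps) _ ic); last exact: mX.
  by rewrite /K; ring.
- rewrite (RintegralZl (1-eps) _ isn); last exact: mX.
  by rewrite /K; ring.
- by rewrite /K; ring.
- by rewrite i0 mul0r.
Qed.
End Aux.

Theorem mainTheorem9 (R : realType) (eps : R) :
  0 <= eps <= 1 -> 1 - (Num.sqrt 2)^-1 <= eps ->
  jointly_measurable_prono_phase eps.
Proof.
move=> /andP[e0 e1] he.
have pi0 : 0 < pi :> R by exact: pi_gt0.
have h2 : 2 * (1 - eps)^+2 <= 1.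
  set s := Num.sqrt (2:R).
  have s0 : 0 < s by rewrite sqrtr_gt0.
  have ss : s^+2 = 2 by rewrite sqr_sqrtr.
  have y0 : 0 <= 1 - eps by lra.
  have ys : (1 - eps) * s <= 1.
    have : (1 - eps) <= s^-1 by lra.
    by rewrite -(ler_pM2r s0) mulVf ?gt_eqF.
  have ys0 : 0 <= (1 - eps) * s by apply: mulr_ge0 => //; exact: ltW.
  have : ((1 - eps) * s)^+2 <= 1 by nra.
  by rewrite exprMn ss mulrC.
have hab : forall n, 0 <= @av R eps n /\ 0 <= @bv R eps n /\
    (@cc R eps)^+2 <= av eps n * bv eps n.
  by move=> n; rewrite /av /bv /cc; case: n; repeat split; nra.
have cc0 : 0 <= @cc R eps by rewrite /cc; lra.
have K2 : (@K R) * (2 * pi) = 1 by rewrite /K mulVf // gt_eqF // mulr_gt0.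
exists (Mj eps); split; first split.
-
  rewrite /Mj /alpha /beta /gamma /delta /Lf /Cf /Sf !sec_D G1_I Gcos_I Gsin_I -herm_1.
  congr herm; rewrite /av /bv; try ring.
  + by transitivity ((@K R) * (2 * pi)); [ring | exact: K2].
  + by transitivity ((@K R) * (2 * pi)); [ring | exact: K2].
- move=> A mA _.
  rewrite /Mj; apply: psd_herm => x0 y0 x1 y1.
  set X := x0^+2 + y0^+2; set Y := x1^+2 + y1^+2.
  set p := x0*x1 + y0*y1; set q := x0*y1 - y0*x1.
  have pq : p^+2 + q^+2 = X * Y by rewrite /p /q /X /Y; ring.
  have X0 : 0 <= X by rewrite /X; apply: addr_ge0; exact: sqr_ge0.
  have Y0 : 0 <= Y by rewrite /Y; apply: addr_ge0; exact: sqr_ge0.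
  have [a0 [b0 c0]] := hab false; have [a1 [b1 c1]] := hab true.
  have B0 := bracket _ _ _ _ _ _ _ _ (msec _ false mA) a0 b0 cc0 c0 X0 Y0 pq.
  have B1 := bracket _ _ _ _ _ _ _ _ (msec _ true mA) a1 b1 cc0 c1 X0 Y0 pq.
  have K0 : 0 <= @K R by rewrite /K invr_ge0 ltW // mulr_gt0.
  have := mulr_ge0 K0 (addr_ge0 B0 B1).
  by rewrite /alpha /beta /gamma /delta /Lf /Cf /Sf => h; apply: (le_trans h); rewrite le_eqVlt; apply/orP; left; apply/eqP; ring.
- move=> F mF _ tF i j.
  have -> : (fun n => \sum_(k < n) Mj eps (F k) i j) =
    (fun n => herm (\sum_(k < n) alpha eps (F k)) (\sum_(k < n) beta eps (F k))
       (\sum_(k < n) gamma eps (F k)) (\sum_(k < n) delta eps (F k)) i j).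
    by apply/funext => n; rewrite -summxE /Mj (herm_sum (fun k => alpha eps (F k)) (fun k => beta eps (F k)) (fun k => gamma eps (F k)) (fun k => delta eps (F k))).
  have sa := SA_alpha eps F mF tF; have sb := SA_beta eps F mF tF.
  have sg := SA_gamma eps F mF tF; have sd := SA_delta eps F mF tF.
  rewrite /complex_cvg.
  rewrite (Re_herm_fun (fun n => \sum_(k < n) alpha eps (F k)) (fun n => \sum_(k < n) beta eps (F k))
    (fun n => \sum_(k < n) gamma eps (F k)) (fun n => \sum_(k < n) delta eps (F k))).
  rewrite (Im_herm_fun (fun n => \sum_(k < n) alpha eps (F k)) (fun n => \sum_(k < n) beta eps (F k))
    (fun n => \sum_(k < n) gamma eps (F k)) (fun n => \sum_(k < n) delta eps (F k))).
  rewrite /Mj !mxE.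
  case: i => [[|[|//]] ?]; case: j => [[|[|//]] ?] //=; split;
    first [exact: cvg_cst | exact: sa | exact: sb | exact: sd | exact: sg |
           (apply: cvgN; exact: sg)].
- move=> n; transitivity (herm (av eps n) 0 0 (bv eps n)); last by symmetry; exact: Nprono_herm.
  rewrite /Mj /alpha /beta /gamma /delta /Lf /Cf /Sf !sec_n.
  case: n => /=; rewrite ?G_set0 G1_I Gcos_I Gsin_I; congr herm; try ring;
    rewrite ?mulr0 ?addr0 ?add0r; exact: Kmul.
- move=> X mX XI; rewrite Phi_herm // /Mj /alpha /beta /gamma /delta /Lf /Cf /Sf !sec_X !G_sub //.
  congr herm; rewrite /av /bv /cc; first [exact: ring1 | exact: ring2 | exact: ring3].
Qed.
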